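(* Let $J$ be an orthogonal complex structure on $\mathbb R^{2n}$ ($n\ge2$), and let $\Lambda_J=\{a-iJa: a\in\mathbb R^{2n}\}\subset\mathbb C^{2n}$. Then the map $$S^{2n-1}\to S(\Lambda_J),\qquad a\mapsto \tfrac{1}{\sqrt2}(a-iJa),$$ is orientation preserving if and only if $J$ is compatible with the standard orientation of $\mathbb R^{2n}$.
   Context: $\mathbb C^{2n}=\mathbb R^{2n}\oplus i\mathbb R^{2n}$ carries the complex bilinear extension of the standard inner product. An orthogonal complex structure $J$ satisfies $J^2=-1$ and $\langle Ja,Jb\rangle=\langle a,b\rangle$; it is compatible with the orientation if there is a positively oriented basis of the form $e_1,Je_1,\dots,e_n,Je_n$. $\Lambda_J$ is a complex $n$-dimensional subspace of $\mathbb C^{2n}$ (complex structure given by multiplication by $i$, which corresponds to $J$ under $a\mapsto a-iJa$). $S^{2n-1}\subset\mathbb R^{2n}$ is the unit sphere with the standard boundary orientation; $S(\Lambda_J)$ is the unit sphere of $\Lambda_J$ oriented as the boundary of its unit ball, with $\Lambda_J$ carrying its complex orientation. *)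

(* Defs.v *)
From HB Require Import structures.
From mathcomp Require Import all_boot all_order all_algebra.
From mathcomp Require Import reals.
Set Implicit Arguments. Unset Strict Implicit. Unset Printing Implicit Defensive.
Import GRing.Theory Num.Theory.
Local Open Scope ring_scope.

(* Vectors of R^N are row vectors 'rV[R]_N; a linear map with matrix J acts
   by a |-> a *m J.  Frames (ordered families of vectors) are functions
   nat -> vector, of which only the first N entries are used. *)

Definition ip (R : realType) (N : nat) (a b : 'rV[R]_N) : R := (a *m b^T) ord0 ord0.

Definition orth_cplx_str (R : realType) (N : nat) (J : 'M[R]_N) : Prop :=
  J *m J = - 1%:M /\ forall a b : 'rV[R]_N, ip (a *m J) (b *m J) = ip a b.

Definition rframe (R : realType) (N : nat) (V : nat -> 'rV[R]_N) : 'M[R]_N :=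
  \matrix_(i < N, j < N) V i ord0 j.

Definition std_pos (R : realType) (N : nat) (V : nat -> 'rV[R]_N) : Prop :=
  0 < \det (rframe V).

Definition consf (T : Type) (x : T) (V : nat -> T) : nat -> T :=
  fun i => if i is j.+1 then V j else x.

Definition compatible_orient (R : realType) (N : nat) (J : 'M[R]_N) : Prop :=
  exists e : nat -> 'rV[R]_N,
    std_pos (fun i => if odd i then e i./2 *m J else e i./2).

(* C^N = R^N (+) i R^N : a vector z is the pair (Re z, Im z) *)
Definition cvec (R : realType) (N : nat) := ('rV[R]_N * 'rV[R]_N)%type.

Definition cemb (R : realType) (N : nat) (z : cvec R N) : 'rV[R]_(N + N) :=
  row_mx z.1 z.2.

(* real inner product on C^N = R^(2N) (real part of the Hermitian product) *)
Definition cip (R : realType) (N : nat) (z w : cvec R N) : R :=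
  ip z.1 w.1 + ip z.2 w.2.

Definition cmulI (R : realType) (N : nat) (z : cvec R N) : cvec R N :=
  (- z.2, z.1).

Definition LamJ (R : realType) (N : nat) (J : 'M[R]_N) (z : cvec R N) : Prop :=
  exists a : 'rV[R]_N, z = (a, - (a *m J)).

Definition cframe_mx (R : realType) (N : nat) (F : nat -> cvec R N)
  : 'M[R]_(N, N + N) := \matrix_(i < N, j < N + N) cemb (F i) ord0 j.

Definition LamJ_basis (R : realType) (N : nat) (J : 'M[R]_N) (F : nat -> cvec R N)
  : Prop :=
  [/\ forall i, (i < N)%N -> LamJ J (F i),
      row_free (cframe_mx F) &
      forall z, LamJ J z -> (cemb z <= cframe_mx F)%MS].

Definition realify (R : realType) (N : nat) (w : nat -> cvec R N) : nat -> cvec R N :=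
  fun i => if odd i then cmulI (w i./2) else w i./2.

(* (F 0, ..., F (N-1)) is a real basis of Lambda_J which is positively
   oriented for the complex orientation of Lambda_J: it differs by a
   positive-determinant change of basis from a basis w_1, i w_1, ..., w_n, i w_n
   obtained from a complex basis (w_k) of Lambda_J *)
Definition LamJ_pos (R : realType) (N : nat) (J : 'M[R]_N) (F : nat -> cvec R N)
  : Prop :=
  exists w : nat -> cvec R N,
    LamJ_basis J (realify w) /\
    exists M : 'M[R]_N,
      cframe_mx F = M *m cframe_mx (realify w) /\ 0 < \det M.

(* V 0, ..., V (N-2) is a positively oriented basis of T_p S^{N-1}
   (boundary orientation: outward normal p first) *)
Definition sph_pos (R : realType) (N : nat) (p : 'rV[R]_N) (V : nat -> 'rV[R]_N)
  : Prop :=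
  (forall k, (k < N.-1)%N -> ip p (V k) = 0) /\ std_pos (consf p V).

(* G 0, ..., G (N-2) is a positively oriented basis of T_q S(Lambda_J)
   (boundary orientation of the unit ball of Lambda_J: outward normal q first,
   Lambda_J with its complex orientation) *)
Definition LamJ_sph_pos (R : realType) (N : nat) (J : 'M[R]_N) (q : cvec R N)
  (G : nat -> cvec R N) : Prop :=
  (forall k, (k < N.-1)%N -> LamJ J (G k) /\ cip q (G k) = 0) /\
  LamJ_pos J (consf q G).

Definition phiJ (R : realType) (N : nat) (J : 'M[R]_N) (a : 'rV[R]_N) : cvec R N :=
  ((Num.sqrt 2)^-1 *: a, - ((Num.sqrt 2)^-1 *: (a *m J))).

(* phiJ : S^{N-1} -> S(Lambda_J) is orientation preserving: at every point p
   of the sphere, its differential (which is phiJ itself on T_p S^{N-1}, phiJ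
   being the restriction of a linear map) sends positively oriented bases of
   T_p S^{N-1} to positively oriented bases of T_{phiJ p} S(Lambda_J). *)
Definition phiJ_orient_pres (R : realType) (N : nat) (J : 'M[R]_N) : Prop :=
  forall p : 'rV[R]_N, ip p p = 1 ->
  forall V : nat -> 'rV[R]_N, sph_pos p V ->
    LamJ_sph_pos J (phiJ J p) (fun k => phiJ J (V k)).

(* Main.v *)
Require Import Defs.
From HB Require Import structures.
From mathcomp Require Import all_boot all_order all_algebra.
From mathcomp Require Import reals.
Set Implicit Arguments. Unset Strict Implicit. Unset Printing Implicit Defensive.
Import GRing.Theory Num.Theory.
Local Open Scope ring_scope.

Lemma cframe_form (R : realType) (N : nat) (J : 'M[R]_N) (F : nat -> cvec R N)
  (G : nat -> 'rV[R]_N) :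
  (forall i, (i < N)%N -> F i = (G i, - (G i *m J))) ->
  cframe_mx F = row_mx (rframe G) (- (rframe G *m J)).
Proof.
move=> H; apply/matrixP => i j.
case: (splitP j) => k hk;
  [have -> : j = lshift _ k by apply: val_inj|have -> : j = rshift _ k by apply: val_inj];
  rewrite [LHS]mxE /cemb (H i (ltn_ord i)) /=;
  rewrite ?row_mxEl ?row_mxEr !mxE //.
congr (- _); apply: eq_bigr => l _; rewrite !mxE //.
Qed.

Lemma rframeZ (R : realType) (N : nat) (c : R) (G : nat -> 'rV[R]_N) :
  rframe (fun i => c *: G i) = c *: rframe G.
Proof. by apply/matrixP => i j; rewrite !mxE. Qed.

Lemma c_gt0 (R : realType) : 0 < (Num.sqrt (2 : R))^-1.
Proof. by rewrite invr_gt0 sqrtr_gt0 ltr0n. Qed.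

Lemma phiJ_form (R : realType) (N : nat) (J : 'M[R]_N) (a : 'rV[R]_N) :
  phiJ J a = ((Num.sqrt 2)^-1 *: a, - (((Num.sqrt 2)^-1 *: a) *m J)).
Proof. by rewrite /phiJ scalemxAl. Qed.

Definition Evec (R : realType) (N : nat) (i : nat) : 'rV[R]_N :=
  \row_(j < N) ((i == j :> nat)%:R).

Lemma ip_E (R : realType) (N : nat) (i k : nat) :
  (i != k)%N -> ip (Evec R N i) (Evec R N k) = 0.
Proof.
move=> ne; rewrite /ip mxE; apply: big1 => j _; rewrite !mxE.
case: eqP => [e|_]; last by rewrite mul0r.
by rewrite -e eq_sym (negbTE ne) mulr0.
Qed.

Lemma ip_E0 (R : realType) (N : nat) : (0 < N)%N -> ip (Evec R N 0) (Evec R N 0) = 1.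
Proof.
move=> hN; rewrite /ip mxE (bigD1 (Ordinal hN)) //= big1 ?addr0.
  by rewrite !mxE /= mulr1.
move=> j; rewrite -val_eqE /= => hj; rewrite !mxE eq_sym (negbTE hj) mul0r //.
Qed.

Lemma rframe_E (R : realType) (N : nat) : rframe (fun i => Evec R N i) = 1%:M.
Proof. by apply/matrixP => i j; rewrite !mxE. Qed.

Lemma ipZl (R : realType) (N : nat) (c : R) (a b : 'rV[R]_N) : ip (c *: a) b = c * ip a b.
Proof. by rewrite /ip -scalemxAl mxE. Qed.
Lemma ipZr (R : realType) (N : nat) (c : R) (a b : 'rV[R]_N) : ip a (c *: b) = c * ip a b.
Proof. by rewrite /ip linearZ /= -scalemxAr mxE. Qed.
Lemma ipNN (R : realType) (N : nat) (a b : 'rV[R]_N) : ip (- a) (- b) = ip a b.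
Proof. by rewrite /ip linearN /= mulNmx mulmxN opprK. Qed.

Theorem proposition5p1 (R : realType) (n : nat) (hn : (2 <= n)%N)
  (J : 'M[R]_(2 * n)) (hJ : orth_cplx_str J) :
  phiJ_orient_pres J <-> compatible_orient J.
Proof.
case: hJ => JJ Jip.
set c := (Num.sqrt (2 : R))^-1.
have cpos : 0 < c := c_gt0 R.
have hN : (0 < 2 * n)%N by rewrite muln_gt0 /= (leq_trans _ hn).
split.
- move=> H.
  have := H (Evec R _ 0) (ip_E0 _ hN) (fun k => Evec R _ k.+1).
  case.
    split; first by move=> k _; apply: ip_E.
    rewrite /std_pos.
    have -> : rframe (consf (Evec R (2 * n) 0) (fun k => Evec R (2 * n) k.+1))
      = rframe (fun i => Evec R _ i) by apply/matrixP => -[[|i] hi] j; rewrite !mxE.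
    by rewrite rframe_E det1 ltr01.
  move=> _ [w [[hL _ _] [M [hM dM]]]].
  set e := fun k => (w k).1.
  exists e.
  rewrite /std_pos.
  have hw : forall i, (i < 2 * n)%N -> realify w i =
     ((realify w i).1, - ((realify w i).1 *m J)).
    by move=> i /hL [a ->].
  have hE : rframe (fun i => (realify w i).1) =
            rframe (fun i => if odd i then e i./2 *m J else e i./2).
    apply/matrixP => i j; rewrite !mxE /realify /e.
    case oi: (odd i) => //=.
    have := hL i (ltn_ord i); rewrite /realify oi /cmulI /LamJ.
    case=> b [] h1 h2; rewrite h1 h2 mulNmx -mulmxA JJ mulmxN mulmx1 opprK //.
  have hF : forall i, (i < 2 * n)%N ->
      consf (phiJ J (Evec R (2 * n) 0)) (fun k => phiJ J (Evec R (2 * n) k.+1)) i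
      = (c *: Evec R _ i, - ((c *: Evec R _ i) *m J)).
    by move=> [|i] _; rewrite /= phiJ_form.
  move: hM; rewrite (cframe_form hF) (cframe_form hw) mul_mx_row.
  case/eq_row_mx => hL1 _.
  move: hL1; rewrite rframeZ rframe_E hE => hL1.
  have := congr1 determinant hL1; rewrite detZ det1 mulr1 det_mulmx => hd.
  rewrite -(pmulr_rgt0 _ dM) -hd exprn_gt0 //.
- case=> e he p hp V [hV hpos].
  split.
    move=> k hk; split; first by exists (c *: V k); rewrite phiJ_form.
    rewrite /cip /phiJ /= ipNN !ipZl !ipZr Jip hV //.
    by rewrite !mulr0 addr0.
  set Ae := fun i => if odd i then e i./2 *m J else e i./2.
  set A := rframe Ae.
  have Au : A \in unitmx by rewrite unitmxE unitfE lt0r_neq0.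
  pose w := fun k => (e k, - (e k *m J)).
  have hw : forall i, (i < 2 * n)%N -> realify w i = (Ae i, - (Ae i *m J)).
    move=> i _; rewrite /realify /Ae /w; case: (odd i) => //=.
    by rewrite /cmulI /= opprK -mulmxA JJ mulmxN mulmx1 opprK.
  have hF : forall i, (i < 2 * n)%N ->
      consf (phiJ J p) (fun k => phiJ J (V k)) i
      = (c *: consf p V i, - ((c *: consf p V i) *m J)).
    by move=> [|i] _; rewrite /= phiJ_form.
  exists w; split.
    split.
    - by move=> i hi; exists (Ae i); exact: hw.
    - rewrite (cframe_form hw); apply/row_freeP; exists (col_mx (invmx A) 0).
      by rewrite mul_row_col mulmx0 addr0 mulmxV.
    - move=> z [a ->]; rewrite /cemb /= (cframe_form hw).
      have -> : row_mx a (- (a *m J)) = (a *m invmx A) *m row_mx A (- (A *m J)).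
        by rewrite mul_mx_row mulmxN mulmxA !(mulmxKV Au).
      exact: submxMl.
  exists (c *: (rframe (consf p V) *m invmx A)); split.
    rewrite (cframe_form hF) (cframe_form hw) rframeZ mul_mx_row mulmxN mulmxA.
    by rewrite -!scalemxAl !(mulmxKV Au).
  rewrite detZ det_mulmx det_inv mulr_gt0 ?exprn_gt0 // mulr_gt0 // invr_gt0 //.
Qed.
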